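(* Let $y_1,\dots,y_n\in\mathbb{R}^k$, $r\in\{1,\dots,n\}$, and let $\mathcal{A}_1,\dots,\mathcal{A}_m$ be a fixed partition of $\mathbb{R}^k$ into $m$ disjoint regions. For $R\in\mathrm{SO}(k)$, diagonal matrices $D_1,\dots,D_m\succcurlyeq 0$, exponents $p_1,\dots,p_m>0$ and $\mu\in\mathbb{R}^k$, define $$d(y,\mu;R,\{D_j\}_{j=1}^m)=\sum_{j=1}^m \mathds{1}\{R(y-\mu)\in\mathcal{A}_j\}\,\|RD_j(y-\mu)\|_{p_j},$$ and $V(\{p_j\},\{D_j\})=\frac{1}{m}\sum_{j=1}^m\lambda(B_{\|\cdot\|_{p_j}}(1))\det(D_j)^{-1}$. Consider $$\text{(A)}\quad \min\ V(\{p_j\},\{D_j\})\quad\text{s.t.}\ R\in\mathrm{SO}(k),\ \mu\in\mathbb{R}^k,\ D_j\in\mathrm{Diag}(k),\ D_j\succcurlyeq 0,\ p_j>0\ \forall j\in[m],\ \mathrm{Card}\{i\in[n]: d(y_i,\mu;R,\{D_j\})\le 1\}\ge n-r+1,$$ and $$\text{(B)}\quad \min\ k\log\big(\sigma_r\{d(y_i,\mu;R,\{D_j\})\}\big)+\log\Big(\sum_{j=1}^m\lambda(B_{\|\cdot\|_{p_j}}(1))\det(D_j)^{-1}\Big)\quad\text{s.t.}\ R\in\mathrm{SO}(k),\ \mu\in\mathbb{R}^k,\ D_j\in\mathrm{Diag}(k),\ D_j\succcurlyeq 0,\ p_j>0\ \forall j\in[m].$$ Then problems (A) and (B) are equivale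nt.
   Context: $\mathrm{SO}(k)=\{R\in\mathbb{R}^{k\times k}: R^\top R=I,\ \det R=1\}$; $\mathrm{Diag}(k)$ is the set of diagonal $k\times k$ matrices. For $p>0$, $\|z\|_p=(\sum_j|z_j|^p)^{1/p}$ and $\lambda(B_{\|\cdot\|_p}(1))=\frac{2^k\Gamma(1+1/p)^k}{\Gamma(1+k/p)}$ is the Lebesgue measure of the unit $\|\cdot\|_p$-ball in $\mathbb{R}^k$. $\det(D)^{-1}$ is $+\infty$ for singular $D$. $\mathds{1}\{\cdot\}$ is the indicator function. For reals $a_1,\dots,a_n$, $\sigma_r\{a_i\}$ denotes the $r$-th largest of them. The quantity $V$ is the paper's definition of the volume of the multi-norm set $\{y: d(y,\mu;R,\{D_j\})\le 1\}$. *)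

(* Defs.v *)
From HB Require Import structures.
From mathcomp Require Import all_boot all_order all_algebra.
From mathcomp Require Import all_classical all_reals all_analysis.
Set Implicit Arguments. Unset Strict Implicit. Unset Printing Implicit Defensive.
Import Order.TTheory GRing.Theory Num.Theory.
Import numFieldNormedType.Exports.
Local Open Scope classical_set_scope.
Local Open Scope ring_scope.

Section Defs.
Variable R : realType.

Definition Gamma (s : R) : R :=
  Rintegral lebesgue_measure `[0%R, +oo[%classic (fun t : R => t `^ (s - 1) * expR (- t)).

(* Lebesgue measure of the unit ||.||_p ball in R^k *)
Definition ballvol (k : nat) (p : R) : R :=
  2 ^+ k * Gamma (1 + p^-1) ^+ k / Gamma (1 + k%:R / p).

Definition pnorm (k : nat) (p : R) (z : 'cV[R]_k) : R :=
  (\sum_(i < k) `|z i 0| `^ p) `^ p^-1.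

Definition SO (k : nat) : set 'M[R]_k :=
  [set Q | Q^T *m Q = 1%:M /\ \det Q = 1].

Definition psd_diag (k : nat) (D : 'M[R]_k) : Prop :=
  is_diag_mx D /\ forall i, 0 <= D i i.

Definition detinv (k : nat) (D : 'M[R]_k) : \bar R :=
  if \det D == 0 then +oo%E else ((\det D)^-1)%:E.

Record params (k m : nat) := Params {
  rot : 'M[R]_k ; ctr : 'cV[R]_k ; dmx : 'I_m -> 'M[R]_k ; expo : 'I_m -> R }.

Variables (k m : nat) (A : 'I_m -> set 'cV[R]_k).

Definition dist (th : params k m) (y : 'cV[R]_k) : R :=
  \sum_(j < m) (if `[< A j (rot th *m (y - ctr th)) >] then 1 else 0)
     * pnorm (expo th j) (rot th *m dmx th j *m (y - ctr th)).

Definition volsum (th : params k m) : \bar R :=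
  (\sum_(j < m) (ballvol k (expo th j))%:E * detinv (dmx th j))%E.
Definition Vol (th : params k m) : \bar R := ((m%:R^-1)%:E * volsum th)%E.

Definition sigma_r (n r : nat) (a : 'I_n -> R) : R :=
  nth 0 (sort (fun u v : R => v <= u) [seq a i | i <- enum 'I_n]) r.-1.

Definition admissible (th : params k m) : Prop :=
  SO (rot th) /\ (forall j, psd_diag (dmx th j)) /\ (forall j, 0 < expo th j).

Variables (n r : nat) (y : 'I_n -> 'cV[R]_k).

Definition feasibleA (th : params k m) : Prop :=
  admissible th /\ (n - r + 1 <= #|[set i : 'I_n | (dist th (y i) <= 1)%R]|)%N.

Definition elog (x : \bar R) : \bar R :=
  match x with
  | EFin a => if 0 < a then (ln a)%:E else -oo%E
  | +oo%E => +oo%E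
  | -oo%E => -oo%E
  end.

Definition objB (th : params k m) : \bar R :=
  if volsum th == +oo%E then +oo%E
  else (k%:R%:E * elog (sigma_r r (fun i => dist th (y i)))%:E + elog (volsum th))%E.

Definition optA (th : params k m) : Prop :=
  feasibleA th /\ forall th', feasibleA th' -> (Vol th <= Vol th')%E.
Definition optB (th : params k m) : Prop :=
  admissible th /\ forall th', admissible th' -> (objB th <= objB th')%E.

Definition rescale (th : params k m) : params k m :=
  Params (rot th) (ctr th)
    (fun j => (sigma_r r (fun i => dist th (y i)))^-1 *: dmx th j) (expo th).

End Defs.

(* Main.v *)
Require Import Defs.
Set Warnings "-all".
From HB Require Import structures.
From mathcomp Require Import all_boot all_order all_algebra.
From mathcomp Require Import all_classical all_reals all_analysis.
From mathcomp Require Import ring lra zify.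
From mathcomp Require Import measurable_realfun lebesgue_integral.
Import Order.TTheory GRing.Theory Num.Theory.
Local Open Scope classical_set_scope.
Local Open Scope ring_scope.


Lemma pow_bound (R : realType) (a t : R) : 0 <= a -> 0 <= t ->
  t `^ a <= ((2 * (Num.trunc a).+1)%:R ^+ (Num.trunc a).+1) * expR (t / 2).
Proof.
move=> a0 t0; set N := (Num.trunc a).+1.
have C1 : 1 <= (2 * N)%:R ^+ N :> R by apply: exprn_ege1; rewrite ler1n muln_gt0.
have aN : a <= N%:R by apply: ltW; exact: truncnS_gt.
have [t1|t1] := leP t 1.
  have e1 : 1 <= expR (t / 2).
    by apply: le_trans (expR_ge1Dx _); rewrite lerDl divr_ge0.
  have : t `^ a <= 1.
    have [->|tn0] := eqVneq t 0.
      by rewrite /powR eqxx; case: (a == 0).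
    rewrite -(powRr0 t); apply: (ger_powR _ a0).
    by rewrite t1 andbT lt_def tn0 t0.
  move=> h; apply: (le_trans h); rewrite -[X in X <= _](mulr1 1).
  by apply: ler_pM.
have t1' : 1 <= t by exact: ltW.
apply: (@le_trans _ _ (t ^+ N)).
  by rewrite -powR_mulrn //; apply: ler_powR.
have Npos : (0 < N)%N by [].
have NR : 0 < N%:R :> R by rewrite ltr0n.
set x := t / (2 * N)%:R.
have x0 : 0 <= x by rewrite divr_ge0.
have hx : x <= expR x by apply: le_trans (expR_ge1Dx _); rewrite lerDr.
have -> : t = (2 * N)%:R * x.
  by rewrite /x mulrC divfK // pnatr_eq0 muln_eq0.
rewrite exprMn; apply: ler_pM => //; first exact: exprn_ge0.
have -> : (2 * N)%:R * x / 2 = N%:R * x.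
  by rewrite natrM; field.
rewrite expRM_natl; apply: lerXn2r => //; rewrite ?nnegrE ?expR_ge0 //.
Qed.



Lemma Gamma_gt0 (R : realType) (s : R) : 1 <= s -> 0 < Gamma s.
Proof.
move=> s1; rewrite /Gamma /Rintegral; apply: fine_gt0.
set a := s - 1.
have a0 : 0 <= a by rewrite subr_ge0.
pose f := fun t : R => t `^ a * expR (- t).
have mf : measurable_fun setT f.
  apply: measurable_funM; first exact: measurable_powR.
  apply: measurableT_comp; first exact: measurable_expR.
  exact: oppr_measurable.
have mfE : forall D, measurable D -> measurable_fun D (fun x => (f x)%:E).
  by move=> D mD; apply/measurable_EFinP; exact: measurable_funS mf.
have f0 : forall t, 0 <= t -> 0 <= f t.
  by move=> t _; rewrite mulr_ge0 // ?powR_ge0 ?expR_ge0.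
have sub0 : forall x : R, [set` `[0%R, +oo[%R] x -> 0 <= x.
  by move=> x /=; rewrite in_itv /= andbT.
apply/andP; split.
- apply: (@lt_le_trans _ _ (\int[lebesgue_measure]_(x in `[1%R, 2%R]) (f x)%:E)%E); last first.
    apply: ge0_subset_integral => //; first exact: mfE.
      by move=> x /sub0 x0; rewrite lee_fin f0.
    move=> x /=; rewrite !in_itv /= => /andP[h _].
    by rewrite (le_trans _ h).
  apply: (@lt_le_trans _ _ (\int[lebesgue_measure]_(x in `[1%R, 2%R]) (cst (expR (-2))%:E x))%E).
    rewrite integral_cst //; have := lebesgue_measure_itv `[1%R, 2%R]; rewrite /= => ->.
    by rewrite lte_fin ltr1n -EFinD mule_gt0 // lte_fin ?expR_gt0 // subr_gt0 ltr1n.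
  apply: ge0_le_integral => //.
  + by move=> x _; rewrite lee_fin expR_ge0.
  + exact: mfE.
  + move=> x /=; rewrite in_itv /= => /andP[x1 x2].
    rewrite lee_fin /f -[X in X <= _]mul1r; apply: ler_pM; rewrite ?ler01 ?expR_ge0 //.
    * by rewrite -(powRr0 x); apply: ler_powR.
    * by rewrite ler_expR lerN2.
- set N := (Num.trunc a).+1.
  set C := ((2 * N)%:R ^+ N : R).
  have C0 : 0 <= C by rewrite exprn_ge0.
  have mE : measurable_fun setT (EFin \o exponential_pdf (2^-1 : R)).
    by apply/measurable_EFinP; exact: measurable_exponential_pdf.
  apply: (@le_lt_trans _ _ (\int[lebesgue_measure]_(x in `[0%R, +oo[) ((2 * C)%:E * (exponential_pdf (2^-1 : R) x)%:E))%E).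
    apply: ge0_le_integral => //.
    + by move=> x /sub0 x0; rewrite lee_fin f0.
    + exact: mfE.
    + apply: emeasurable_funM => //.
      apply/measurable_EFinP; apply: measurable_funS (measurable_exponential_pdf _) => //.
    + move=> x /sub0 x0; rewrite -EFinM lee_fin exponential_pdfE //.
      rewrite /f; apply: (@le_trans _ _ (C * expR (x / 2) * expR (- x))).
        by apply: ler_wpM2r; [exact: expR_ge0 | exact: pow_bound].
      rewrite -mulrA -expRD le_eqVlt; apply/orP; left; apply/eqP.
      have -> : x / 2 + - x = - 2^-1 * x by field.
      by field.
  rewrite ge0_integralZl //; last 3 first.
  + exact: measurable_funS mE.
  + by move=> x _; rewrite lee_fin exponential_pdf_ge0 // invr_ge0.
  + by rewrite lee_fin mulr_ge0.
  apply: (@le_lt_trans _ _ ((2 * C)%:E * \int[lebesgue_measure]_x (exponential_pdf (2^-1 : R) x)%:E))%E.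
    apply: lee_wpmul2l; first by rewrite lee_fin mulr_ge0.
    apply: ge0_subset_integral => //.
    by move=> x _; rewrite lee_fin exponential_pdf_ge0 // invr_ge0.
  by rewrite integral_exponential_pdf ?invr_gt0 // mule1 ltry.
Qed.


Lemma pnorm_ge0 (R : realType) k (p : R) (z : 'cV[R]_k) : 0 <= pnorm p z.
Proof. exact: powR_ge0. Qed.

Lemma pnormZ (R : realType) k (p c : R) (z : 'cV[R]_k) : 0 < p -> 0 < c ->
  pnorm p (c *: z) = c * pnorm p z.
Proof.
move=> p0 c0; rewrite /pnorm.
under eq_bigr do rewrite mxE normrM (gtr0_norm c0) powRM ?(ltW c0) //.
rewrite -mulr_sumr powRM ?powR_ge0 //; last by rewrite sumr_ge0 // => i _; exact: powR_ge0.
by rewrite -powRrM mulfV ?gt_eqF // powRr1 // ltW.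
Qed.

Definition scale (R : realType) k m (th : params R k m) (c : R) : params R k m :=
  @Params R k m (Defs.rot th) (ctr th) (fun j => c *: dmx th j) (expo th).

Arguments scale {R k m}.

Lemma dist_scale (R : realType) k m (A : 'I_m -> set 'cV[R]_k) th c x :
  (forall j, 0 < expo th j) -> 0 < c ->
  dist A (scale th c) x = c * dist A th x.
Proof.
move=> p0 c0; rewrite /dist mulr_sumr; apply: eq_bigr => j _ /=.
by rewrite -scalemxAr -scalemxAl pnormZ // mulrCA.
Qed.

Lemma dist_ge0 (R : realType) k m (A : 'I_m -> set 'cV[R]_k) th x :
  0 <= dist A th x.
Proof.
rewrite /dist sumr_ge0 // => j _; rewrite mulr_ge0 ?pnorm_ge0 //.
by case: ifP.
Qed.

Lemma rescaleE (R : realType) k m (A : 'I_m -> set 'cV[R]_k) n r y th :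
  rescale A r y th = scale th (sigma_r r (fun i : 'I_n => dist A th (y i)))^-1.
Proof. by []. Qed.

Lemma sigma_rZ (R : realType) n r (a : 'I_n -> R) c : 0 < c ->
  sigma_r r (fun i => c * a i) = c * sigma_r r a.
Proof.
move=> c0; rewrite /sigma_r.
have -> : [seq c * a i | i <- enum 'I_n] = [seq c * x | x <- [seq a i | i <- enum 'I_n]].
  by elim: (enum 'I_n) => //= ? ? ->.
rewrite (@sort_map _ _ (fun x => c * x)).
have -> : (relpre (fun x => c * x) (fun u v : R => v <= u) : rel R) = (fun u v : R => v <= u).
  by apply/funext => u; apply/funext => v /=; rewrite ler_pM2l.
set s := sort _ _.
have [lt|ge] := ltnP r.-1 (size s).
  by rewrite (nth_map 0).
by rewrite !nth_default ?size_map // mulr0.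
Qed.

Lemma card_count n (P : pred 'I_n) : #|[set i | P i]| = count P (enum 'I_n).
Proof.
rewrite cardE /enum_mem size_filter /= count_filter.
apply: eq_count => i; rewrite !inE andbT; apply/idP/idP => [/set_mem //|h]; exact/mem_set.
Qed.

Lemma sigma_r_count (R : realType) n r (a : 'I_n -> R) (t : R) : (1 <= r <= n)%N ->
  (n - r + 1 <= #|[set i | (a i <= t)%R]|)%N = (sigma_r r a <= t).
Proof.
move=> /andP[r1 rn].
set s := sort (fun u v : R => v <= u) [seq a i | i <- enum 'I_n].
have ss : sorted (fun u v : R => v <= u) s.
  by apply: sort_sorted => u v; exact: le_total.
have sz : size s = n by rewrite size_sort size_map size_enum_ord.
have tr : transitive (fun u v : R => v <= u).
  by move=> u v w h1 h2; exact: le_trans h2 h1.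
have rf : reflexive (fun u v : R => v <= u) by move=> u.
have mono : forall i j, (i <= j < n)%N -> nth 0 s j <= nth 0 s i.
  move=> i j /andP[ij jn].
  by apply: (sorted_leq_nth tr rf 0 ss) => //; rewrite inE sz ?(leq_ltn_trans ij).
have -> : #|[set i | (a i <= t)%R]| = count (fun x => (x <= t)%R) s.
  rewrite /s (permP (permEl (perm_sort _ _))) count_map.
  by rewrite (card_count _ (fun i => (a i <= t)%R : bool)).
rewrite /sigma_r -/s.
have r1n : (r.-1 < n)%N by rewrite prednK // ltnS.
case: leP => h.
  rewrite -(cat_take_drop r.-1 s) count_cat.
  apply: leq_trans (leq_addl _ _).
  have : all (fun x => x <= t) (drop r.-1 s).
    apply/(all_nthP 0) => j; rewrite size_drop sz => jl.
    rewrite nth_drop; apply: le_trans h; apply: mono.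
    by rewrite leq_addr /= -ltn_subRL.
  rewrite all_count => /eqP ->; rewrite size_drop sz.
  lia.
apply/negbTE; rewrite -ltnNge.
rewrite -(cat_take_drop r s) count_cat.
have e1 : count (fun x => x <= t) (take r s) = 0%N.
  apply/eqP; rewrite -leqn0 leqNgt -has_count -all_predC.
  apply/(all_nthP 0) => j; rewrite size_take sz => jl.
  have jr : (j < r)%N.
    by move: jl; case: (ltnP r n) => // nr H; exact: leq_trans H nr.
  rewrite /= nth_take // -ltNge; apply: lt_le_trans h _; apply: mono.
  apply/andP; split; lia.
rewrite e1 add0n.
apply: leq_ltn_trans (count_size _ _) _.
by rewrite size_drop sz addn1 ltnS.
Qed.

Lemma sigma_r_ge0 (R : realType) n r (a : 'I_n -> R) : (1 <= r <= n)%N ->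
  (forall i, 0 <= a i) -> 0 <= sigma_r r a.
Proof.
move=> /andP[r1 rn] a0; rewrite /sigma_r.
set s := sort _ _.
have sz : size s = n by rewrite size_sort size_map size_enum_ord.
have : nth 0 s r.-1 \in s by apply: mem_nth; rewrite sz prednK.
rewrite mem_sort => /mapP [i _ ->]; exact: a0.
Qed.

Lemma det_psd_ge0 (R : realType) k (D : 'M[R]_k) : psd_diag D -> 0 <= \det D.
Proof.
move=> [/diag_mxP [d ->] h]; rewrite det_diag prodr_ge0 // => i _.
by have := h i; rewrite mxE eqxx mulr1n.
Qed.

Lemma detinv_scale (R : realType) k (D : 'M[R]_k) c : 0 < c ->
  detinv (c *: D) = (((c ^+ k)^-1)%:E * detinv D)%E.
Proof.
move=> c0; rewrite /detinv detZ mulf_eq0 expf_eq0 (gt_eqF c0) andbF /=.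
case: ifP => _; first by rewrite gt0_muley // lte_fin invr_gt0 exprn_gt0.
by rewrite -EFinM invfM.
Qed.

Lemma detinv_gt0 (R : realType) k (D : 'M[R]_k) : psd_diag D -> (0 < detinv D)%E.
Proof.
move=> /det_psd_ge0 h; rewrite /detinv; case: ifPn => // d0.
by rewrite lte_fin invr_gt0 lt_def d0 h.
Qed.

Lemma ballvol_gt0 (R : realType) k (p : R) : 0 < p -> 0 < ballvol k p.
Proof.
move=> p0; rewrite /ballvol; apply: divr_gt0.
  apply: mulr_gt0; first by rewrite exprn_gt0.
  by apply: exprn_gt0; apply: Gamma_gt0; rewrite lerDl invr_ge0 ltW.
by apply: Gamma_gt0; rewrite lerDl divr_ge0 // ltW.
Qed.

Lemma volsum_scale (R : realType) k m (th : params R k m) c :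
  (forall j, psd_diag (dmx th j)) -> (forall j, 0 < expo th j) -> 0 < c ->
  volsum (scale th c) = (((c ^+ k)^-1)%:E * volsum th)%E.
Proof.
move=> hD hp c0; rewrite /volsum ge0_sume_distrr; last first.
  move=> j _; rewrite mule_ge0 // ?lee_fin ?ltW ?ballvol_gt0 //.
  exact: detinv_gt0.
apply: eq_bigr => j _ /=.
by rewrite detinv_scale // muleCA.
Qed.

Lemma volsum_gt0 (R : realType) k m (th : params R k m) :
  (0 < m)%N -> (forall j, psd_diag (dmx th j)) -> (forall j, 0 < expo th j) ->
  (0 < volsum th)%E.
Proof.
move=> m0 hD hp; rewrite /volsum (bigD1 (Ordinal m0)) //=.
have t0 : forall j, (0 < (ballvol k (expo th j))%:E * detinv (dmx th j))%E.
  by move=> j; rewrite mule_gt0 // ?lte_fin ?ballvol_gt0 // detinv_gt0.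
apply: lt_le_trans (t0 (Ordinal m0)) _.
rewrite leeDl // sume_ge0 // => j _; exact: ltW.
Qed.

Lemma expeR_objB (R : realType) k m (A : 'I_m -> set 'cV[R]_k) n r
    (y : 'I_n -> 'cV[R]_k) (th : params R k m) (v : R) :
  volsum th = v%:E -> 0 < v -> 0 <= sigma_r r (fun i => dist A th (y i)) ->
  expeR (objB A r y th) = ((sigma_r r (fun i => dist A th (y i))) ^+ k * v)%:E.
Proof.
move=> hv v0; set s := sigma_r _ _ => s0.
rewrite /objB hv /= -/s v0.
have [sp|] := ltP 0 s.
  by rewrite -EFinM -EFinD /= expRD expRM_natl !lnK.
move=> sle; have -> : s = 0 by apply/eqP; rewrite eq_le s0 andbT.
case: (posnP k) => [k0|kp].
  have -> : (k%:R : R) = 0 by rewrite k0.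
  have -> : (0 : R) ^+ k = 1 by rewrite k0 expr0.
  by rewrite mul0e add0e /= lnK // mul1r.
by rewrite gt0_muleNy ?lte_fin ?ltr0n // addNye /= expr0n gtn_eqF // mul0r.
Qed.

Set Implicit Arguments.
Unset Strict Implicit.

Lemma volsum_cases (R : realType) k m (th : params R k m) :
  (0 < m)%N -> admissible th ->
  volsum th = +oo%E \/ exists2 v : R, 0 < v & volsum th = v%:E.
Proof.
move=> m0 [_ [hD hp]]; have := @volsum_gt0 _ _ _ th m0 hD hp.
case: (volsum th) => [v||] //; last by left.
by rewrite lte_fin => v0; right; exists v.
Qed.

Lemma sig_scale (R : realType) k m (A : 'I_m -> set 'cV[R]_k) n r
    (y : 'I_n -> 'cV[R]_k) (th : params R k m) c :
  (forall j, 0 < expo th j) -> 0 < c ->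
  sigma_r r (fun i => dist A (scale th c) (y i)) =
  c * sigma_r r (fun i => dist A th (y i)).
Proof.
move=> hp c0; rewrite -sigma_rZ //; congr sigma_r; apply/funext => i.
exact: dist_scale.
Qed.

Lemma feasibleP (R : realType) k m (A : 'I_m -> set 'cV[R]_k) n r
    (y : 'I_n -> 'cV[R]_k) (th : params R k m) :
  (1 <= r <= n)%N ->
  feasibleA A r y th <-> admissible th /\ sigma_r r (fun i => dist A th (y i)) <= 1.
Proof.
move=> hr; rewrite /feasibleA -(@sigma_r_count _ _ _ _ 1 hr); split; case=> h1 h2 //.
Qed.

Lemma L1 (R : realType) k m (A : 'I_m -> set 'cV[R]_k) n r
    (y : 'I_n -> 'cV[R]_k) (th : params R k m) :
  (1 <= r <= n)%N -> (0 < m)%N -> feasibleA A r y th ->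
  ((m%:R^-1)%:E * expeR (objB A r y th) <= Vol th)%E.
Proof.
move=> hr m0 /(feasibleP _ _ _ hr) [adm s1]; rewrite /Vol.
apply: lee_wpmul2l; first by rewrite lee_fin invr_ge0.
have s0 : 0 <= sigma_r r (fun i => dist A th (y i)).
  by apply: sigma_r_ge0 => // i; exact: dist_ge0.
case: (volsum_cases m0 adm) => [->|[v v0 hv]]; first exact: leey.
rewrite (@expeR_objB _ _ _ A _ r y th v hv v0 s0) hv lee_fin ler_piMl //; first exact: ltW.
by rewrite exprn_ile1.
Qed.

Lemma admissible_scale (R : realType) k m (th : params R k m) c :
  admissible th -> 0 < c -> admissible (scale th c).
Proof.
move=> [hR [hD hp]] c0; split => //; split => // j; have [/is_diag_mxP hd hj] := hD j.
split; last by move=> i; rewrite mxE mulr_ge0 // ltW.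
by apply/is_diag_mxP => i l il; rewrite mxE hd // mulr0.
Qed.

Lemma scale_k0 (R : realType) m (th : params R 0 m) c : scale th c = th.
Proof.
case: th => a b d e; rewrite /scale /=; congr Params.
by apply/funext => j; rewrite !flatmx0.
Qed.

Lemma L3 (R : realType) k m (A : 'I_m -> set 'cV[R]_k) n r
    (y : 'I_n -> 'cV[R]_k) (th : params R k m) :
  (1 <= r <= n)%N -> (0 < m)%N -> admissible th -> objB A r y th \is a fin_num ->
  feasibleA A r y (rescale A r y th) /\
  Vol (rescale A r y th) = ((m%:R^-1)%:E * expeR (objB A r y th))%E.
Proof.
move=> hr m0 adm fo.
have s0 : 0 <= sigma_r r (fun i => dist A th (y i)).
  by apply: sigma_r_ge0 => // i; exact: dist_ge0.
case: (volsum_cases m0 adm) => [hv|[v v0 hv]].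
  by move: fo; rewrite /objB hv eqxx.
have E := @expeR_objB _ _ _ A _ r y th v hv v0 s0.
move: s0 E; set s := sigma_r r _ => s0 E.
have [sp|] := ltP 0 s.
  have [hR [hD hp]] := adm.
  rewrite rescaleE -/s; split.
    apply/feasibleP => //; split; first by apply: admissible_scale; rewrite // invr_gt0.
    by rewrite sig_scale ?invr_gt0 // -/s mulVf ?gt_eqF.
  rewrite /Vol volsum_scale ?invr_gt0 // hv E -EFinM.
  by rewrite exprVn invrK.
move=> sle; have s00 : s = 0 by apply/eqP; rewrite eq_le s0 andbT.
case: (posnP k) => [k0|kp].
  subst k; rewrite rescaleE scale_k0; split.
    by apply/feasibleP => //; split => //; rewrite -/s s00 ler01.
  by rewrite E /Vol hv s00 expr0 mul1r.
have : objB A r y th = -oo%E.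
  by apply/eqP; rewrite -expeR_eq0 E s00 expr0n gtn_eqF // mul0r.
by move=> h; move: fo; rewrite h.
Qed.

Lemma L2 (R : realType) k m (A : 'I_m -> set 'cV[R]_k) n r
    (y : 'I_n -> 'cV[R]_k) (th : params R k m) :
  (1 <= r <= n)%N -> (0 < m)%N -> admissible th ->
  (ereal_inf [set Vol th | th in feasibleA A r y] <=
   (m%:R^-1)%:E * expeR (objB A r y th))%E.
Proof.
move=> hr m0 adm.
have mi0 : 0 < m%:R^-1 :> R by rewrite invr_gt0 ltr0n.
have s0 : 0 <= sigma_r r (fun i => dist A th (y i)).
  by apply: sigma_r_ge0 => // i; exact: dist_ge0.
case: (volsum_cases m0 adm) => [hv|[v v0 hv]].
  by rewrite /objB hv eqxx /= gt0_muley ?lte_fin // leey.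
have E := @expeR_objB _ _ _ A _ r y th v hv v0 s0.
move: s0 E; set s := sigma_r r _ => s0 E.
have [sp|] := ltP 0 (s ^+ k * v).
  have fo : objB A r y th \is a fin_num.
    move: E; case: (objB A r y th) => //= E.
    by move: sp; rewrite -lte_fin -E ltxx.
  have [f3 V3] := L3 hr m0 adm fo.
  by apply: ereal_inf_lbound; exists (rescale A r y th).
move=> sle; have e0 : s ^+ k * v = 0.
  by apply/eqP; rewrite eq_le sle mulr_ge0 // ?exprn_ge0 // ltW.
move: (e0) => /eqP; rewrite mulf_eq0 (gt_eqF v0) orbF expf_eq0 => /andP[kp /eqP s00].
rewrite E e0 mule0.
have [hR [hD hp]] := adm.
apply/lee_addgt0Pr => e e_gt0; rewrite add0e.
set M := m%:R^-1 * v.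
have M0 : 0 < M by rewrite mulr_gt0.
set c := M / e + 1.
have c1 : 1 <= c by rewrite lerDr divr_ge0 // ltW.
have c0 : 0 < c by apply: lt_le_trans c1.
apply: (@le_trans _ _ (Vol (scale th c))).
  apply: ereal_inf_lbound; exists (scale th c) => //.
  apply/feasibleP => //; split; first exact: admissible_scale.
  by rewrite sig_scale // -/s s00 mulr0 ler01.
rewrite /Vol volsum_scale // hv -!EFinM lee_fin.
have -> : m%:R^-1 * ((c ^+ k)^-1 * v) = M / c ^+ k.
  by rewrite /M mulrAC -mulrA mulrCA.
rewrite ler_pdivrMr ?exprn_gt0 //.
apply: (@le_trans _ _ (e * c)); last first.
  by rewrite ler_pM2l // ler_eXnr.
by rewrite /c mulrDr mulrC divfK ?gt_eqF // mulr1 lerDl ltW.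
Qed.

Theorem proposition2 (R : realType) (k n m r : nat) (y : 'I_n -> 'cV[R]_k)
  (A : 'I_m -> set 'cV[R]_k) :
  (1 <= r <= n)%N ->
  (forall i j : 'I_m, i != j -> A i `&` A j = set0) ->
  \bigcup_(j in setT) A j = setT ->
  [/\ ereal_inf [set Vol th | th in feasibleA A r y]
        = ((m%:R^-1)%:E * expeR (ereal_inf [set objB A r y th | th in @admissible R k m]))%E,
      forall th, optA A r y th -> optB A r y th
    & forall th, optB A r y th -> objB A r y th \is a fin_num ->
        optA A r y (rescale A r y th)].
Proof.
move=> hr _ hcov.
have m0 : (0 < m)%N.
  rewrite lt0n; apply/negP => /eqP m00; subst m.
  have : (setT : set 'cV[R]_k) 0 by [].
  by rewrite -hcov => -[[j ?] _ _].
have mi0 : 0 < m%:R^-1 :> R by rewrite invr_gt0 ltr0n.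
have mif : ((m%:R^-1)%:E : \bar R) \is a fin_num by [].
set IA := ereal_inf _.
set IB := ereal_inf _.
have P1 : IA = ((m%:R^-1)%:E * expeR IB)%E.
  apply/eqP; rewrite eq_le; apply/andP; split; last first.
    apply: le_ereal_inf_tmp => _ [th fth <-].
    apply: le_trans (L1 hr m0 fth).
    apply: lee_wpmul2l; first by rewrite lee_fin ltW.
    rewrite lee_expeR.
    by apply: ereal_inf_lbound; exists th => //; case: fth.
  rewrite leNgt; apply/negP => H.
  have R0 : (0 <= (m%:R^-1)%:E * expeR IB)%E.
    by apply: mule_ge0; [rewrite lee_fin; exact: ltW | exact: expeR_ge0].
  move: H; case E: IA => [l| |] H; last by move: H; rewrite ltNge leNye.
  - have l0 : 0 < l by rewrite -lte_fin; exact: le_lt_trans H.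
    have ml0 : 0 < m%:R * l by rewrite mulr_gt0 // ltr0n.
    have hx : (IB < (ln (m%:R * l))%:E)%E.
      rewrite ltNge; apply/negP => hx.
      have := H; rewrite ltNge => /negP; apply.
      have : (expeR (ln (m%:R * l))%:E <= expeR IB)%E by rewrite lee_expeR.
      rewrite /= lnK // => h; apply: le_trans (lee_wpmul2l (ltW _) h).
        by rewrite -EFinM mulrA mulVf ?mul1r // pnatr_eq0 -lt0n.
      by rewrite lte_fin.
    have [_ [th adm <-] hlt] := ereal_inf_lt hx.
    have := @L2 _ _ _ A _ r y th hr m0 adm; rewrite -/IA E => h.
    have : (expeR (objB A r y th) < (m%:R * l)%:E)%E.
      have -> : ((m%:R * l)%:E : \bar R) = expeR (ln (m%:R * l))%:E by rewrite [RHS]/expeR lnK // posrE.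
      by rewrite lte_expeR.
    move=> h2.
    have h3 : ((m%:R^-1)%:E * expeR (objB A r y th) < (m%:R^-1)%:E * (m%:R * l)%:E)%E.
      by rewrite lte_pmul2l // lte_fin.
    have mn0 : (m%:R : R) != 0 by rewrite pnatr_eq0 -lt0n.
    rewrite -EFinM mulrA mulVf // mul1r in h3.
    by have := le_lt_trans h h3; rewrite ltxx.
  - have hx : (IB < +oo)%E.
      rewrite ltNge leye_eq; apply/negP => /eqP hIB.
      by move: H; rewrite hIB /= gt0_muley ?lte_fin // ltxx.
    have [_ [th adm <-] hlt] := ereal_inf_lt hx.
    have := @L2 _ _ _ A _ r y th hr m0 adm; rewrite -/IA E => h.
    have : ((m%:R^-1)%:E * expeR (objB A r y th) < +oo)%E.
      apply: lte_mul_pinfty; rewrite ?lee_fin ?ltW //.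
      by rewrite -lte_expeR in hlt.
    by rewrite ltNge h.
split => //.
- move=> th [fth opt]; split; first by case: fth.
  move=> th' adm'.
  have VA : Vol th = IA.
    apply/eqP; rewrite eq_le; apply/andP; split.
      by apply: le_ereal_inf_tmp => _ [th2 f2 <-]; exact: opt.
    by apply: ereal_inf_lbound; exists th.
  have h1 := L1 hr m0 fth; rewrite VA P1 in h1.
  have h2 : (IB <= objB A r y th')%E by apply: ereal_inf_lbound; exists th'.
  rewrite -lee_expeR -(lee_pmul2l mif) ?lte_fin //.
  apply: le_trans h1 _; apply: lee_wpmul2l; first by rewrite lee_fin ltW.
  by rewrite lee_expeR.
- move=> th [adm opt] fo; have [f3 V3] := L3 hr m0 adm fo.
  split => // th' fth'; rewrite V3.
  apply: le_trans (L1 hr m0 fth'); apply: lee_wpmul2l; first by rewrite lee_fin ltW.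
  by rewrite lee_expeR; apply: opt; case: fth'.
Qed.
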